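(* Let $k\neq r$ be jobs with $t_r\le t_k$, and suppose there is a job $j$ such that both $(j,k)$ and $(j,r)$ are red pairs. Let $N^-(x)=\{i:(i,x)\text{ is a red pair}\}$. Then: (a) for every $j'\in N^-(k)$ with $m_{j'}\le m_j$, we have $j'\in N^-(r)$ (so $N^-(k)\cap N^-(r)$ is an initial segment of $N^-(k)$ ordered by $m$); (b) there is no job $j''\in N^-(r)$ with $m_{j''}>m_{j'}$ for all $j'\in N^-(k)$.
   Context: Jobs $j$ have test time $t_j\ge0$ and processing time $p_j\ge0$; $m_j=\max\{t_j,p_j\}$, $\sigma_j=t_j+p_j$. Standing assumption (general position): no two of the $3n$ numbers $t_j,p_j,\sigma_j$ ($j=1,\dots,n$) are equal. Fix constants $\mu>1$ and $0<\nu<1$ with $\mu\nu>1$ and $1+\frac1\mu\le\nu+\nu^2$. A job $j$ is imbalanced if $m_j\ge\mu\min\{t_j,p_j\}$. For distinct jobs $j,k$, the ordered pair $(j,k)$ is a red pair if $j$ is imbalanced, $m_j\ge t_k\ge\nu m_j$, and $p_k\ge\nu t_k$. *)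

(* Defs.v *)
From mathcomp Require Import all_boot all_order all_algebra.
Set Implicit Arguments. Unset Strict Implicit. Unset Printing Implicit Defensive.
Import Order.TTheory GRing.Theory Num.Theory.
Local Open Scope ring_scope.

Section Jobs.
Variables (R : realFieldType) (n : nat) (t p : 'I_n -> R).

Definition mj (j : 'I_n) : R := Num.max (t j) (p j).
Definition sigmaj (j : 'I_n) : R := t j + p j.

Definition gp_val (x : 'I_n * 'I_3) : R :=
  match val x.2 with
  | 0%N => t x.1
  | 1%N => p x.1
  | _ => sigmaj x.1
  end.

Definition general_position : Prop := injective gp_val.

Definition imbalanced (mu : R) (j : 'I_n) : Prop :=
  mj j >= mu * Num.min (t j) (p j).

Definition red_pair (mu nu : R) (j k : 'I_n) : Prop :=
  j <> k /\ imbalanced mu j /\ mj j >= t k /\ t k >= nu * mj j /\ p k >= nu * t k.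

End Jobs.

(* Main.v *)
Require Import Defs.
From mathcomp Require Import all_boot all_order all_algebra.
From mathcomp Require Import lra.
Import Order.TTheory GRing.Theory Num.Theory.
Local Open Scope ring_scope.

Lemma mj_cases (R : realFieldType) (n : nat) (t p : 'I_n -> R) i :
  t i <= mj t p i /\ p i <= mj t p i /\ (mj t p i = t i \/ mj t p i = p i).
Proof. rewrite /mj /Num.max; case: (ltrP (t i) (p i)) => h; do ?split; lra. Qed.

Arguments mj_cases {R n}.

Lemma min_cases (R : realFieldType) (x y : R) :
  Num.min x y <= x /\ Num.min x y <= y /\ (Num.min x y = x \/ Num.min x y = y).
Proof. rewrite /Num.min; case: (ltrP x y) => h; do ?split; lra. Qed.

Arguments min_cases {R}.

Lemma gp_tp (R : realFieldType) (n : nat) (t p : 'I_n -> R) i :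
  general_position t p -> t i <> p i.
Proof.
move=> hgp e.
have := hgp (i, Ordinal (isT : (0 < 3)%N)) (i, Ordinal (isT : (1 < 3)%N)).
by rewrite /gp_val /= e => /(_ erefl) [].
Qed.

Arguments gp_tp {R n t p}.

Lemma key (R : realFieldType) (n : nat) (t p : 'I_n -> R) mu nu i :
  0 <= t i -> 0 <= p i -> 1 < mu -> 1 < mu * nu ->
  imbalanced t p mu i -> nu * mj t p i <= Num.min (t i) (p i) -> mj t p i = 0.
Proof.
rewrite /imbalanced => h1 h2 hmu hmn him hmin.
have [a [b _]] := mj_cases t p i.
set m := mj t p i in a b him hmin *.
set q := Num.min (t i) (p i) in him hmin *.
have : mu * (nu * m) <= mu * q by rewrite ler_pM2l //; lra.
rewrite mulrA => h.
nra.
Qed.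

Arguments key {R n t p mu nu i}.

Theorem mainTheorem7 (R : realFieldType) (n : nat) (t p : 'I_n -> R)
    (mu nu : R)
    (ht : forall i, 0 <= t i) (hp : forall i, 0 <= p i)
    (hgp : general_position t p)
    (hmu : 1 < mu) (hnu0 : 0 < nu) (hnu1 : nu < 1) (hmunu : 1 < mu * nu)
    (hmunu2 : 1 + mu^-1 <= nu + nu ^+ 2)
    (k r : 'I_n) (hkr : k <> r) (htrk : t r <= t k)
    (j : 'I_n) (hjk : red_pair t p mu nu j k) (hjr : red_pair t p mu nu j r) :
  (forall j' : 'I_n, red_pair t p mu nu j' k -> mj t p j' <= mj t p j ->
     red_pair t p mu nu j' r)
  /\
  ~ (exists j'' : 'I_n, red_pair t p mu nu j'' r /\
       forall j' : 'I_n, red_pair t p mu nu j' k -> mj t p j'' > mj t p j').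
Proof.
case: hjk => hjk0 [hij [a1 [a2 a3]]].
case: hjr => _ [_ [b1 [b2 b3]]].
split.
- move=> j' [c0 [c1 [c2 [c3 c4]]]] hle.
  have tr : nu * mj t p j' <= t r by rewrite (le_trans _ b2) // ler_pM2l.
  rewrite /red_pair; split; last first.
    split=> //; split; first lra. by split.
  move=> e; subst j'.
  have [m1 [m2 m3]] := mj_cases t p r.
  have [n1 [n2 n3]] := min_cases (t r) (p r).
  have hm : nu * mj t p r <= Num.min (t r) (p r).
    case: n3 => ->; first lra.
    have := hp r => hpr.
    case: m3 => e; rewrite e; [exact: b3 | nra].
  have z := key (ht r) (hp r) hmu hmunu c1 hm.
  apply: (gp_tp r hgp); have := ht r; have := hp r; lra.
- case=> j'' [[d0 [d1 [d2 [d3 d4]]]] hall].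
  have hjj := hall j (conj hjk0 (conj hij (conj a1 (conj a2 a3)))).
  have hk : j'' <> k.
    move=> e; subst j''.
    have [m1 [m2 m3]] := mj_cases t p k.
    have [n1 [n2 n3]] := min_cases (t k) (p k).
    have hpk := hp k; have htk := ht k.
    have e : mj t p k = p k by case: m3 => // e; lra.
    rewrite /imbalanced e in d1.
    rewrite e in d3 hjj.
    have hmin : Num.min (t k) (p k) = t k by case: n3 => // e'; lra.
    rewrite hmin in d1.
    have : mu * (nu * p k) <= mu * t k by rewrite ler_pM2l //; lra.
    rewrite mulrA => h.
    nra.
  have e1 : t k <= mj t p j'' by lra.
  have e2 : nu * mj t p j'' <= t k by lra.
  have := hall j'' (conj hk (conj d1 (conj e1 (conj e2 a3)))).
  by rewrite ltxx.
Qed.
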